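(* Let $\sigma$ be the involution of $\operatorname{Hilb}^m(S_\tau)$ induced by $(u,v,z)\mapsto(u,-v,z)$ on $S_\tau$. Then the Lagrangians $\mathcal{K}=\Sigma_{\alpha_1}\times\dots\times\Sigma_{\alpha_m}$ and $\mathcal{K}'=\Sigma_{\beta_1}\times\dots\times\Sigma_{\beta_m}$ in $\mathcal{Y}_{m,\tau}\subset\operatorname{Hilb}^m(S_\tau)$ are mapped into themselves by $\sigma$, and the fixed point sets of $\sigma|_{\mathcal{K}}$ and $\sigma|_{\mathcal{K}'}$ are the tori $\mathbb{T}_{\hat\alpha}=\hat\alpha_1\times\dots\times\hat\alpha_m$ and $\mathbb{T}_{\hat\beta}=\hat\beta_1\times\dots\times\hat\beta_m$, respectively, which lie in $\operatorname{Sym}^m(\hat S_\tau)\setminus\nabla$.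
   Context: $\tau$ is a set of $2m$ distinct complex numbers with sum $0$, $P_\tau(z)=\prod_{\mu\in\tau}(z-\mu)$, $S_\tau=\{u^2+v^2+P_\tau(z)=0\}\subset\mathbb{C}^3$, $\hat S_\tau=\{(u,z)\in\mathbb{C}^2:u^2+P_\tau(z)=0\}$ (the fixed curve of $(u,v,z)\mapsto(u,-v,z)$), and $\operatorname{Sym}^m(\hat S_\tau)=\operatorname{Hilb}^m(\hat S_\tau)\subset\operatorname{Hilb}^m(S_\tau)$. $\nabla\subset\operatorname{Sym}^m(\hat S_\tau)$ is the anti-diagonal: unordered tuples $\{(u_k,z_k)\}$ with $(u_i,z_i)=(-u_j,z_j)$ for some $i\ne j$. $\alpha_1,\dots,\alpha_m$ and $\beta_1,\dots,\beta_m$ are two crossingless matchings of $\tau$ (each a family of $m$ pairwise disjoint embedded arcs joining the points of $\tau$ in pairs). For an arc $\delta$, $\Sigma_\delta=\{(u,v,z)\in S_\tau: z\in\delta,\ u,v\in\sqrt{-P_\tau(z)}\,\mathbb{R}\}$ and $\hat\delta=\{(u,z)\in\mathbb{C}^2: z\in\delta,\ u=\pm\sqrt{-P_\tau(z)}\}\subset\hat S_\tau$, a simple closed curve. $\mathcal{Y}_{m,\tau}$ is the variety of quadruples of polynomials $(A,B,C,D)$ ($A,D$ monic of degree $m$ with opposite subleading coefficients, $\deg B,\deg C\le m-1$) with $AD-BC=P_\tau$, embedded openly in $\operatorname{Hilb}^m(S_\tau)$ by $(A,B,C,D)\mapsto\{Q: A(t)\mid Q(\frac{B+C}2(t),\frac{B-C}{2i}(t),t)\}$;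 the products $\mathcal{K},\mathcal{K}'$ lie in the part of it identified (via Hilbert–Chow) with unordered $m$-tuples of points of $S_\tau$ with distinct $z$-coordinates. *)

(* Defs.v *)
From HB Require Import structures.
From mathcomp Require Import all_boot all_order all_algebra.
From mathcomp Require Import all_classical all_reals all_analysis.
From mathcomp Require Import complex.
Set Implicit Arguments. Unset Strict Implicit. Unset Printing Implicit Defensive.
Import Order.TTheory GRing.Theory Num.Theory.
Import numFieldNormedType.Exports.
Local Open Scope classical_set_scope.
Local Open Scope ring_scope.
Local Open Scope complex_scope.

Section Prop72Defs.
Variable R : realType.
Local Notation C := R[i].

Definition pt3 := (C * C * C)%type.
Definition pt2 := (C * C)%type.

Definition Ptau (tau : seq C) (z : C) : C := \prod_(mu <- tau) (z - mu).

Definition tau_ok (m : nat) (tau : seq C) : Prop :=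
  [/\ size tau = (2 * m)%N, uniq tau & \sum_(mu <- tau) mu = 0].

Definition I01 : set R := `[(0:R), 1]%classic.

Definition arc_pts (g : R -> C) : set C := g @` I01.

(* embedded arc: continuous (C = R^2 with the product topology) and injective on [0,1] *)
Definition embedded_arc (g : R -> C) : Prop :=
  [/\ {within I01, continuous (fun t => @complex.Re R (g t))},
      {within I01, continuous (fun t => @complex.Im R (g t))} &
      (forall s t, I01 s -> I01 t -> g s = g t -> s = t)].

Definition crossingless_matching (m : nat) (tau : seq C) (a : 'I_m -> R -> C) : Prop :=
  [/\ (forall k, embedded_arc (a k)),
      (forall k, a k 0 \in tau /\ a k 1 \in tau),
      (forall k l, k != l -> arc_pts (a k) `&` arc_pts (a l) = set0) &
      (forall mu, mu \in tau -> exists k, mu = a k 0 \/ mu = a k 1)].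

(* w lies in sqrt(c) * R  (independent of the choice of square root) *)
Definition in_sqrt_line (c w : C) : Prop :=
  exists (s : C) (r : R), s ^+ 2 = c /\ w = s * r%:C.

Definition Sigma (tau : seq C) (delta : set C) : set pt3 :=
  fun p => let: (u, v, z) := p in
    [/\ u ^+ 2 + v ^+ 2 + Ptau tau z = 0, delta z,
        in_sqrt_line (- Ptau tau z) u & in_sqrt_line (- Ptau tau z) v].

Definition hat_arc (tau : seq C) (delta : set C) : set pt2 :=
  fun p => delta p.2 /\ p.1 ^+ 2 = - Ptau tau p.2.

(* the involution (u,v,z) |-> (u,-v,z) and its action on configurations
   (unordered m-tuples, represented by a seq; equality up to perm_eq) *)
Definition sigma_pt (p : pt3) : pt3 := let: (u, v, z) := p in (u, - v, z).
Definition sigma_conf (X : seq pt3) : seq pt3 := map sigma_pt X.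
Definition zcoord (p : pt3) : C := p.2.

Definition embed2 (p : pt2) : pt3 := (p.1, 0, p.2).

Definition in_prod (m : nat) (A : 'I_m -> set pt3) (X : seq pt3) : Prop :=
  exists f : 'I_m -> pt3, (forall k, A k (f k)) /\ perm_eq X (map f (enum 'I_m)).

Definition Kprod (m : nat) (tau : seq C) (a : 'I_m -> R -> C) : seq pt3 -> Prop :=
  in_prod (fun k => Sigma tau (arc_pts (a k))).

Definition Ttorus (m : nat) (tau : seq C) (a : 'I_m -> R -> C) : seq pt3 -> Prop :=
  in_prod (fun k => embed2 @` hat_arc tau (arc_pts (a k))).

Definition antidiag (Y : seq pt2) : Prop :=
  exists i j, [/\ (i < size Y)%N, (j < size Y)%N, i != j &
    nth (0, 0) Y i = (- (nth (0, 0) Y j).1, (nth (0, 0) Y j).2)].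

Definition in_Sym_minus_nabla (m : nat) (tau : seq C) (X : seq pt3) : Prop :=
  exists Y : seq pt2, [/\ X = map embed2 Y, size Y = m,
    (forall p, p \in Y -> p.1 ^+ 2 + Ptau tau p.2 = 0) & ~ antidiag Y].

(* conclusion of Prop 7.2 for one matching a:
   K sits in the distinct-z locus of Y_{m,tau} (where Hilb^m = unordered tuples),
   sigma maps K into itself, Fix(sigma|_K) = T_hat a, and T_hat a subset Sym^m(hat S) \ nabla *)
Definition prop72_for (m : nat) (tau : seq C) (a : 'I_m -> R -> C) : Prop :=
  [/\ (forall X, Kprod tau a X -> uniq (map zcoord X)),
      (forall X, Kprod tau a X -> Kprod tau a (sigma_conf X)),
      (forall X, (Kprod tau a X /\ perm_eq (sigma_conf X) X) <-> Ttorus tau a X) &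
      (forall X, Ttorus tau a X -> in_Sym_minus_nabla m tau X)].

End Prop72Defs.

(* Main.v *)
Require Import Defs.
From HB Require Import structures.
From mathcomp Require Import all_boot all_order all_algebra.
From mathcomp Require Import all_classical all_reals all_analysis.
From mathcomp Require Import complex.
Set Implicit Arguments. Unset Strict Implicit. Unset Printing Implicit Defensive.
Import Order.TTheory GRing.Theory Num.Theory.
Local Open Scope ring_scope.
Local Open Scope complex_scope.

Lemma disj_z (R : realType) m (a : 'I_m -> R -> R[i]) :
  (forall k l, k != l -> (arc_pts (a k) `&` arc_pts (a l) = set0)%classic) ->
  forall k l z, arc_pts (a k) z -> arc_pts (a l) z -> k = l.
Proof.
move=> H k l z hk hl; apply/eqP; apply/negPn/negP => /H E.
have : (arc_pts (a k) `&` arc_pts (a l))%classic z by split.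
by rewrite E.
Qed.

Lemma in_prod_uniq (R : realType) m (A : 'I_m -> set (pt3 R)) X :
  (forall k l p q, A k p -> A l q -> zcoord p = zcoord q -> k = l) ->
  in_prod A X -> uniq (map (@zcoord R) X).
Proof.
move=> HA [f [Hf Hp]].
rewrite (perm_uniq (perm_map _ Hp)) -map_comp map_inj_uniq ?enum_uniq // => k l /= E.
exact: HA (Hf k) (Hf l) E.
Qed.

Lemma one_matching (R : realType) m (tau : seq R[i]) (a : 'I_m -> R -> R[i]) :
  crossingless_matching tau a -> prop72_for tau a.
Proof.
case=> _ _ Hd _.
have Dz := disj_z Hd.
have HSig : forall k l p q, Sigma tau (arc_pts (a k)) p -> Sigma tau (arc_pts (a l)) q ->
    zcoord p = zcoord q -> k = l.
  move=> k l [[u v] z] [[u' v'] z'] [_ hz _ _] [_ hz' _ _] /= E; subst.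
  exact: Dz hz hz'.
have HT : forall k l p q, (@embed2 R @` hat_arc tau (arc_pts (a k)))%classic p ->
    (@embed2 R @` hat_arc tau (arc_pts (a l)))%classic q -> zcoord p = zcoord q -> k = l.
  move=> k l p q [p' [hz _] <-] [q' [hz' _] <-] /= E; rewrite E in hz.
  exact: Dz hz hz'.
split.
- move=> X HX; exact: in_prod_uniq HSig HX.
- move=> X [f [Hf Hp]]; exists (@sigma_pt R \o f); split.
    move=> k /=; move: (Hf k); case: (f k) => [[u v] z] [h1 h2 h3 h4]; split => //.
      by rewrite sqrrN.
    case: h4 => s [r [hs ->]]; exists s, (-r); split => //.
    by rewrite -mulrN; congr (_ * _); apply/eqP; rewrite eq_complex /= oppr0 !eqxx.
  by rewrite map_comp; apply: perm_map.
- move=> X; split.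
    case=> -[f [Hf Hp]] Hs.
    have Hinj : forall k l, zcoord (f k) = zcoord (f l) -> k = l.
      by move=> k l; apply: HSig (Hf k) (Hf l).
    exists f; split => // k.
    have E : @sigma_pt R (f k) = f k.
      have : @sigma_pt R (f k) \in X.
        rewrite -(perm_mem Hs); apply: map_f.
        by rewrite (perm_mem Hp); apply: map_f; rewrite mem_enum.
      rewrite (perm_mem Hp) => /mapP [l _ El].
      have : k = l by apply: Hinj; rewrite -El; case: (f k) => [[u v] z].
      by move=> kl; rewrite El kl.
    move: E (Hf k); case: (f k) => [[u v] z] /= [Ev] [h1 h2 _ _].
    have v0 : v = 0.
      have : v *+ 2 = 0 by rewrite mulr2n -{1}Ev addNr.
      by move/eqP; rewrite mulrn_eq0 /= => /eqP.
    subst v; exists (u, z) => //; split => //=.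
    by apply/eqP; rewrite -addr_eq0; move: h1; rewrite expr0n /= addr0 => ->.
  case=> f [Hf Hp]; split.
    exists f; split => // k.
    case: (Hf k) => -[u z] [hz hu] <- /=.
    split => //.
    - by rewrite expr0n /= addr0 /= hu addNr.
    - by exists u, 1; rewrite mulr1.
    - by exists u, 0; rewrite mulr0.
  rewrite /sigma_conf map_id_in // => p.
  rewrite (perm_mem Hp) => /mapP [k _ ->].
  case: (Hf k) => -[u z] _ <- /=.
  by rewrite oppr0.
- move=> X HX.
  have U := in_prod_uniq HT HX.
  case: HX => f [Hf Hp].
  have Xe : forall p, p \in X -> exists q, p = embed2 q /\
      q.1 ^+ 2 + Ptau tau q.2 = 0.
    move=> p; rewrite (perm_mem Hp) => /mapP [k _ ->].
    case: (Hf k) => q [_ hu] <-; exists q; split => //.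
    by rewrite hu addNr.
  exists (map (fun p : pt3 R => (p.1.1, p.2)) X); split.
  - rewrite -map_comp map_id_in // => p /Xe [q [-> _]].
    by case: q.
  - by rewrite size_map (perm_size Hp) size_map size_enum_ord.
  - move=> p /mapP [x /Xe [q [-> hq]] ->]; exact: hq.
  - case=> i [j [hi hj hij E]].
    have Ez := congr1 snd E; rewrite /= in Ez.
    rewrite size_map in hi hj.
    have Hi : (i < size (map (@zcoord R) X))%N by rewrite size_map.
    have Hj : (j < size (map (@zcoord R) X))%N by rewrite size_map.
    have := nth_uniq 0 Hi Hj U.
    rewrite !(nth_map (0 : pt3 R)) // in Ez; rewrite !(nth_map (0 : pt3 R)) //.
    by rewrite /= in Ez; rewrite /zcoord Ez eqxx (negbTE hij).
Qed.

Theorem proposition7p2 (R : realType) (m : nat) (tau : seq R[i])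
    (alpha beta : 'I_m -> R -> R[i]) :
  tau_ok m tau ->
  crossingless_matching tau alpha ->
  crossingless_matching tau beta ->
  prop72_for tau alpha /\ prop72_for tau beta.
Proof.
move=> _ Ha Hb; split; exact: one_matching.
Qed.
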